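(* Let $E\to M$ be a vector bundle of rank at least $n$ with a pseudo-metric $\langle\cdot,\cdot\rangle$. Let $\widehat{u}^1,\dots,\widehat{u}^n\in\Gamma(E)$ be linearly independent over $C^\infty(M)$, and let $\widehat{Z}_1,\dots,\widehat{Z}_n$ be covariant differential operators on $E$ with symbols $\widehat{z}_i\in\Gamma(TM)$ satisfying $\langle\widehat{Z}_i(e_1),e_2\rangle+\langle e_1,\widehat{Z}_i(e_2)\rangle=\widehat{z}_i\langle e_1,e_2\rangle$. Define $a_E(e)=\sum_i\langle e,\widehat{u}^i\rangle\widehat{z}_i$ and $$e_1\circ e_2=\sum_i\Big(\langle e_1,\widehat{u}^i\rangle\widehat{Z}_i(e_2)-\langle e_2,\widehat{u}^i\rangle\widehat{Z}_i(e_1)+\langle\widehat{Z}_i(e_1),e_2\rangle\widehat{u}^i\Big).$$ Suppose there are $C_{ik}^j\in C^\infty(M)$ such that for all $i,j$: $$\widehat{Z}_i(\widehat{u}^j)=\sum_kC_{ik}^j\widehat{u}^k,\qquad [\widehat{z}_i,\widehat{z}_j]=\sum_k\big(C_{ji}^k-C_{ij}^k\big)\widehat{z}_k,\qquad\langle\widehat{u}^i,\widehat{u}^j\rangle=0.$$ Then $(E,\langle\cdot,\cdot\rangle,\circ,a_E)$ is a pre-Courant algebroid.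
   Context: A covariant differential operator on $E$: $\mathbb{R}$-linear $\widehat{Z}:\Gamma(E)\to\Gamma(E)$ with symbol $\widehat{z}\in\Gamma(TM)$ such that $\widehat{Z}(fe)=f\widehat{Z}(e)+\widehat{z}(f)e$. A pre-Courant algebroid $(E,\langle\cdot,\cdot\rangle,\circ,a_E)$: a bundle map $a_E:E\to TM$ and $\mathbb{R}$-bilinear bracket $\circ$ on $\Gamma(E)$ with $a_E(e)\langle h_1,h_2\rangle=\langle e\circ h_1,h_2\rangle+\langle h_1,e\circ h_2\rangle$, $e\circ e=\tfrac12\mathcal{D}\langle e,e\rangle$ (where $\langle\mathcal{D}(f),e\rangle=a_E(e)(f)$), and $a_E(e_1\circ e_2)=[a_E(e_1),a_E(e_2)]$. *)

(* Defs.v *)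
(* Algebraic (Lie-Rinehart style) model of smooth geometry:
   A   ~ C^oo(M), a commutative R-algebra (R a real field, e.g. the reals);
   V   ~ Gamma(E), an A-module;
   vector fields ~ R-linear derivations of A, with the commutator bracket. *)
From HB Require Import structures.
From mathcomp Require Import all_boot all_order all_algebra.
Set Implicit Arguments. Unset Strict Implicit. Unset Printing Implicit Defensive.
Import Order.TTheory GRing.Theory Num.Theory.
Local Open Scope ring_scope.

Section Defs.
Variables (R : realFieldType) (A : comAlgType R) (V : lmodType A).

Definition is_vector_field (X : A -> A) : Prop :=
  (forall (c : R) (f g : A), X (c *: f + g) = c *: X f + X g) /\
  (forall f g : A, X (f * g) = f * X g + g * X f).

Definition vf_bracket (X Y : A -> A) : A -> A := fun f => X (Y f) - Y (X f).

Definition pseudo_metric (g : V -> V -> A) : Prop :=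
  (forall e h, g e h = g h e) /\
  (forall (f : A) e e' h, g (f *: e + e') h = f * g e h + g e' h) /\
  (forall e, (forall h, g e h = 0) -> e = 0).

Definition cov_diff_op (Z : V -> V) (z : A -> A) : Prop :=
  (forall (c : R) e h, Z ((c%:A : A) *: e + h) = (c%:A : A) *: Z e + Z h) /\
  (forall (f : A) e, Z (f *: e) = f *: Z e + z f *: e).

Definition pre_Courant (g : V -> V -> A) (circ : V -> V -> V) (aE : V -> A -> A)
  : Prop :=
  (* a_E is a bundle map E -> TM *)
  (forall e, is_vector_field (aE e)) /\
  (forall (f : A) e h x, aE (f *: e + h) x = f * aE e x + aE h x) /\
  (forall (c : R) e1 e2 h,
      circ ((c%:A : A) *: e1 + e2) h = (c%:A : A) *: circ e1 h + circ e2 h) /\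
  (forall (c : R) e h1 h2,
      circ e ((c%:A : A) *: h1 + h2) = (c%:A : A) *: circ e h1 + circ e h2) /\
  (forall e h1 h2, aE e (g h1 h2) = g (circ e h1) h2 + g h1 (circ e h2)) /\
  (* e o e = 1/2 D<e,e>, with D defined by <D f, e> = a_E(e)(f) *)
  (exists D : A -> V,
      (forall f e, g (D f) e = aE e f) /\
      (forall e, circ e e = ((2%:R)^-1 : R)%:A *: D (g e e))) /\
  (forall e1 e2 f, aE (circ e1 e2) f = vf_bracket (aE e1) (aE e2) f).

Definition lin_indep (n : nat) (u : 'I_n -> V) : Prop :=
  forall c : 'I_n -> A, \sum_(i < n) c i *: u i = 0 -> forall i, c i = 0.

Definition anchor_of (n : nat) (g : V -> V -> A) (u : 'I_n -> V)
  (z : 'I_n -> A -> A) : V -> A -> A :=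
  fun e f => \sum_(i < n) g e (u i) * z i f.

Definition bracket_of (n : nat) (g : V -> V -> A) (u : 'I_n -> V)
  (Z : 'I_n -> V -> V) : V -> V -> V :=
  fun e1 e2 => \sum_(i < n)
    (g e1 (u i) *: Z i e2 - g e2 (u i) *: Z i e1 + g (Z i e1) e2 *: u i).

End Defs.

(* Main.v *)
Require Import Defs.
From HB Require Import structures.
From mathcomp Require Import all_boot all_order all_algebra.
From mathcomp Require Import ring.
Import GRing.Theory Num.Theory.
Local Open Scope ring_scope.

Lemma zmod6 (M : zmodType) (p q r s t w : M) :
  (p + q) - (r + s) + (t + w) = (p - r + t) + (q - s + w).
Proof. by rewrite opprD (addrACA p) (addrACA (p - r)). Qed.

Lemma aux1 (S : comPzRingType) (W : lmodType S) (k a a' b d d' : S) (X Y Y' U : W) :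
  (k * a + a') *: X - b *: (k *: Y + Y') + (k * d + d') *: U =
  k *: (a *: X - b *: Y + d *: U) + (a' *: X - b *: Y' + d' *: U).
Proof.
rewrite !scalerDl !scalerDr scalerN -!scalerA (scalerA b k) (mulrC b k) -scalerA.
by rewrite zmod6.
Qed.

Lemma aux2 (S : comPzRingType) (W : lmodType S) (k a b b' d d' : S) (X X' Y U : W) :
  a *: (k *: X + X') - (k * b + b') *: Y + (k * d + d') *: U =
  k *: (a *: X - b *: Y + d *: U) + (a *: X' - b' *: Y + d' *: U).
Proof.
rewrite !scalerDl !scalerDr scalerN -!scalerA (scalerA a k) (mulrC a k) -scalerA.
by rewrite zmod6.
Qed.

Lemma key (S : comPzRingType) n (a b F : 'I_n -> S) (da db H : 'I_n -> 'I_n -> S)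
  (C : 'I_n -> 'I_n -> 'I_n -> S) :
  (forall i j, H i j - H j i = \sum_(k < n) (C j i k - C i j k) * F k) ->
  \sum_(j < n) (\sum_(i < n) (a i * (db i j - \sum_(k < n) C i k j * b k)
       - b i * (da i j - \sum_(k < n) C i k j * a k))) * F j
  = \sum_(i < n) a i * \sum_(j < n) (b j * H i j + F j * db i j)
    - \sum_(i < n) b i * \sum_(j < n) (a j * H i j + F j * da i j).
Proof.
move=> hH.
pose alpha := \sum_(i < n) \sum_(j < n) \sum_(k < n) a i * b j * C i j k * F k.
pose beta := \sum_(i < n) \sum_(j < n) \sum_(k < n) a i * b j * C j i k * F k.
have e1 : \sum_(i < n) \sum_(j < n) a i * (\sum_(k < n) C i k j * b k) * F j = alpha.
  apply: eq_bigr => i _.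
  under eq_bigr => j _ do rewrite mulr_sumr mulr_suml.
  rewrite exchange_big /=; apply: eq_bigr => j _; apply: eq_bigr => k _; ring.
have e2 : \sum_(i < n) \sum_(j < n) b i * (\sum_(k < n) C i k j * a k) * F j = beta.
  rewrite /beta [RHS]exchange_big /=; apply: eq_bigr => i _.
  under eq_bigr => j _ do rewrite mulr_sumr mulr_suml.
  rewrite [RHS]exchange_big /=; apply: eq_bigr => j _; apply: eq_bigr => k _; ring.
have e3 : \sum_(i < n) \sum_(j < n) (a i * b j * H i j - b i * a j * H i j)
    = beta - alpha.
  have sw : \sum_(i < n) \sum_(j < n) b i * a j * H i j
      = \sum_(i < n) \sum_(j < n) a i * b j * H j i.
    by rewrite exchange_big /=; apply: eq_bigr => i _; apply: eq_bigr => j _; ring.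
  under eq_bigr => i _ do rewrite sumrB.
  rewrite sumrB sw -sumrB /alpha /beta -sumrB; apply: eq_bigr => i _.
  rewrite -!sumrB; apply: eq_bigr => j _.
  rewrite -sumrB (_ : a i * b j * H i j - a i * b j * H j i
      = a i * b j * (H i j - H j i)); last by ring.
  rewrite hH mulr_sumr; apply: eq_bigr => k _; ring.
have eqij : forall i j,
  (a i * (db i j - \sum_(k < n) C i k j * b k)
       - b i * (da i j - \sum_(k < n) C i k j * a k)) * F j
  - (a i * (b j * H i j + F j * db i j) - b i * (a j * H i j + F j * da i j))
  = b i * (\sum_(k < n) C i k j * a k) * F j - a i * (\sum_(k < n) C i k j * b k) * F j
    - (a i * b j * H i j - b i * a j * H i j).
  by move=> i j; ring.
apply/eqP; rewrite -subr_eq0; apply/eqP.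
under eq_bigr => j _ do rewrite mulr_suml.
rewrite exchange_big /=.
under [X in _ - (X - _)]eq_bigr => i _ do rewrite mulr_sumr.
under [X in _ - (_ - X)]eq_bigr => i _ do rewrite mulr_sumr.
rewrite -sumrB -sumrB.
under eq_bigr => i _ do rewrite -!sumrB.
under eq_bigr => i _ do under eq_bigr => j _ do rewrite eqij.
under eq_bigr => i _ do rewrite sumrB sumrB.
by rewrite sumrB sumrB e1 e2 e3 subrr.
Qed.

(* C i k j stands for C_{ik}^j. *)
Theorem proposition3p12 (R : realFieldType) (A : comAlgType R) (V : lmodType A)
  (n : nat) (g : V -> V -> A) (u : 'I_n -> V)
  (Z : 'I_n -> V -> V) (z : 'I_n -> A -> A) (C : 'I_n -> 'I_n -> 'I_n -> A) :
  pseudo_metric g ->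
  lin_indep u ->
  (forall i, is_vector_field (z i)) ->
  (forall i, cov_diff_op (Z i) (z i)) ->
  (forall i e1 e2, g (Z i e1) e2 + g e1 (Z i e2) = z i (g e1 e2)) ->
  (forall i j, Z i (u j) = \sum_(k < n) C i k j *: u k) ->
  (forall i j f, vf_bracket (z i) (z j) f
                 = \sum_(k < n) (C j i k - C i j k) * z k f) ->
  (forall i j, g (u i) (u j) = 0) ->
  pre_Courant g (bracket_of g u Z) (anchor_of g u z).
Proof.
move=> [gsym [glin _]] _ zvf Zcov Zmet ZuC zbr guu.
have gadd : forall e e' h, g (e + e') h = g e h + g e' h.
  by move=> e e' h; have := glin 1 e e' h; rewrite scale1r mul1r.
have g0 : forall h, g 0 h = 0.
  by move=> h; apply: (@addrI _ (g 0 h)); rewrite addr0 -gadd addr0.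
have gZ : forall f e h, g (f *: e) h = f * g e h.
  by move=> f e h; have := glin f e 0 h; rewrite !addr0 g0 addr0.
have gN : forall e h, g (- e) h = - g e h.
  by move=> e h; rewrite -scaleN1r gZ mulN1r.
have gsum : forall (I : Type) (r : seq I) (P : pred I) (F : I -> V) h,
    g (\sum_(i <- r | P i) F i) h = \sum_(i <- r | P i) g (F i) h.
  by move=> I r P F h; apply: (big_morph (fun e => g e h) (fun e e' => gadd e e' h) (g0 h)).
have gaddr : forall e e' h, g h (e + e') = g h e + g h e'.
  by move=> e e' h; rewrite gsym gadd !(gsym h).
have gZr : forall f e h, g h (f *: e) = f * g h e.
  by move=> f e h; rewrite gsym gZ gsym.
have gNr : forall e h, g h (- e) = - g h e.
  by move=> e h; rewrite gsym gN gsym.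
have gsumr : forall (I : Type) (r : seq I) (P : pred I) (F : I -> V) h,
    g h (\sum_(i <- r | P i) F i) = \sum_(i <- r | P i) g h (F i).
  by move=> I r P F h; rewrite gsym gsum; apply: eq_bigr => i _; rewrite gsym.
have zadd : forall i f h, z i (f + h) = z i f + z i h.
  by move=> i f h; have := (zvf i).1 1 f h; rewrite !scale1r.
have zM : forall i f h, z i (f * h) = f * z i h + h * z i f := fun i => (zvf i).2.
have z0 : forall i, z i 0 = 0.
  by move=> i; apply: (@addrI _ (z i 0)); rewrite addr0 -zadd addr0.
have zsum : forall i (I : Type) (r : seq I) (P : pred I) (F : I -> A),
    z i (\sum_(j <- r | P j) F j) = \sum_(j <- r | P j) z i (F j).
  by move=> i I r P F; apply: (big_morph (z i) (zadd i) (z0 i)).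
have Zadd : forall i e h, Z i (e + h) = Z i e + Z i h.
  by move=> i e h; have := (Zcov i).1 1 e h; rewrite scale1r (scale1r e) (scale1r (Z i e)).
have Z0 : forall i, Z i 0 = 0.
  by move=> i; apply: (@addrI _ (Z i 0)); rewrite addr0 -Zadd addr0.
have ZcZ : forall i (c : R) e, Z i ((c%:A : A) *: e) = (c%:A : A) *: Z i e.
  by move=> i c e; have := (Zcov i).1 c e 0; rewrite addr0 Z0 addr0.
have gZu : forall i e j, g (Z i e) (u j)
    = z i (g e (u j)) - \sum_(k < n) C i k j * g e (u k).
  move=> i e j; rewrite -(Zmet i e (u j)) ZuC gsumr.
  by under eq_bigr => k _ do rewrite gZr; rewrite addrK.
have zZ : forall i (c : R) f, z i (c *: f) = c *: z i f.
  by move=> i c f; have := (zvf i).1 c f 0; rewrite addr0 z0 addr0.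
have glinr : forall f e e' h, g h (f *: e + e') = f * g h e + g h e'.
  by move=> f e e' h; rewrite gaddr gZr.
rewrite /pre_Courant /anchor_of /bracket_of.
split.
  move=> e; split.
    move=> c f h; under eq_bigr => i _ do rewrite (zvf i).1 mulrDr.
    rewrite big_split /= scaler_sumr; congr (_ + _); apply: eq_bigr => i _.
    by rewrite scalerAr.
  move=> f h; under eq_bigr => i _ do rewrite zM mulrDr.
  rewrite big_split /= !mulr_sumr; congr (_ + _); apply: eq_bigr => i _;
    by rewrite mulrCA.
split.
  move=> f e h x; under eq_bigr => i _ do rewrite glin mulrDl.
  by rewrite big_split /= mulr_sumr; congr (_ + _); apply: eq_bigr => i _; rewrite mulrA.
split.
  move=> c e1 e2 h; rewrite scaler_sumr -big_split; apply: eq_bigr => i _ /=.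
  rewrite Zadd ZcZ !glin.
  by rewrite aux1.
split.
  move=> c e h1 h2; rewrite scaler_sumr -big_split; apply: eq_bigr => i _ /=.
  rewrite Zadd ZcZ !glin !glinr.
  by rewrite aux2.
split.
  move=> e h1 h2; rewrite gsum gsumr -big_split; apply: eq_bigr => i _ /=.
  rewrite !gadd !gaddr !gN !gNr !gZ !gZr (gsym (u i) h2) (gsym h1 (Z i e)) -Zmet.
  ring.
split.
  exists (fun f => \sum_(i < n) z i f *: u i); split.
    move=> f e; rewrite gsum; apply: eq_bigr => i _.
    by rewrite gZ gsym mulrC.
  move=> e; rewrite scaler_sumr; apply: eq_bigr => i _.
  rewrite subrr add0r scalerA -Zmet (gsym e (Z i e)) -mulr2n mulrnAr -mulrnAl.
  rewrite scalerMnl -mulr_natr mulVf; last by rewrite pnatr_eq0.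
  by rewrite scale1r mul1r.
move=> e1 e2 f; rewrite /vf_bracket.
under eq_bigr => j _ do rewrite gsum.
under eq_bigr => j _ do under eq_bigr => i _ do rewrite !gadd gN !gZ guu mulr0 addr0 !gZu.
under [X in _ = X - _]eq_bigr => i _ do rewrite zsum.
under [X in _ = _ - X]eq_bigr => i _ do rewrite zsum.
under [X in _ = X - _]eq_bigr => i _ do under eq_bigr => j _ do rewrite zM.
under [X in _ = _ - X]eq_bigr => i _ do under eq_bigr => j _ do rewrite zM.
apply: (@key _ n (fun i => g e1 (u i)) (fun i => g e2 (u i))
  (fun j => z j f) (fun i j => z i (g e1 (u j)))
  (fun i j => z i (g e2 (u j))) (fun i j => z i (z j f)) C).
by move=> i j /=; have := zbr i j f; rewrite /vf_bracket.
Qed.
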